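(* For every positive integer $n$, with $P^r_n=\sum_{b\in Z_n^r}\prod_{s=1}^rC_{b_s}$, $$\sum_{\substack{1\le r\le n\\ r\text{ odd}}}P^r_n=nC_{n-1}\qquad\text{and}\qquad\sum_{\substack{1\le r\le n\\ r\text{ even}}}P^r_n=(n-1)C_{n-1}.$$
   Context: $C_m=\frac{1}{m+1}\binom{2m}{m}$ is the $m$-th Catalan number ($C_0=1$) and $Z_n^r=\{(b_1,\dots,b_r)\in\mathbb Z^r: b_s>0\text{ for all }s,\ \sum_{s=1}^rb_s=n\}$. *)

(* Defs.v *)
From mathcomp Require Import all_boot.
Set Implicit Arguments. Unset Strict Implicit. Unset Printing Implicit Defensive.

Definition catalan (m : nat) : nat := 'C(m.*2, m) %/ m.+1.

(* P^r_n = sum over compositions b in Z_n^r of prod_s C_{b_s}.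
   Since every part b_s satisfies 0 < b_s <= n, compositions are encoded as
   functions 'I_r -> 'I_n.+1 with all parts positive and sum n. *)
Definition P (r n : nat) : nat :=
  \sum_(b : {ffun 'I_r -> 'I_n.+1} |
          [forall s, 0 < val (b s)] && (\sum_(s < r) val (b s) == n))
    \prod_(s < r) catalan (b s).

(* Main.v *)
Require Import Defs.
From mathcomp Require Import all_boot all_order all_algebra zify ring.
Import GRing.Theory Num.Theory Order.TTheory.

Lemma cat_add m : catalan m + 'C(m.*2, m.+1) = 'C(m.*2, m).
Proof.
have h := mul_bin_left m.*2 m.
have e : m.*2 - m = m by rewrite -addnn addnK.
rewrite e in h.
have le : 'C(m.*2, m.+1) <= 'C(m.*2, m).
  by rewrite -(leq_pmul2l (ltn0Sn m)) h leq_mul2r leqnSn orbT.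
have d : 'C(m.*2, m) = m.+1 * ('C(m.*2, m) - 'C(m.*2, m.+1)).
  by rewrite mulnBr h -mulnBl subSnn mul1n.
rewrite /catalan {1}d mulKn // subnK //.
Qed.

Lemma cat_mul m : m.+1 * catalan m = 'C(m.*2, m).
Proof.
rewrite /catalan; have := cat_add m; rewrite /catalan => h.
have h2 := mul_bin_left m.*2 m.
have e : m.*2 - m = m by rewrite -addnn addnK.
rewrite e in h2.
have d : 'C(m.*2, m) = m.+1 * ('C(m.*2, m) - 'C(m.*2, m.+1)).
  by rewrite mulnBr h2 -mulnBl subSnn mul1n.
by rewrite {2}d {1}d mulKn.
Qed.

Lemma cat_ratio m : m.+2 * catalan m.+1 = (m.*2.+1).*2 * catalan m.
Proof.
apply/eqP; rewrite -(eqn_pmul2l (ltn0Sn m)); apply/eqP.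
have h1 := cat_mul m.+1. have h0 := cat_mul m.
have d1 := mul_bin_diag (m.+1).*2 m.
have d2 := mul_bin_diag (m.*2.+1) m.
have s : 'C(m.*2.+1, m) = 'C(m.*2.+1, m.+1).
  rewrite -(bin_sub (n:=m.*2.+1) (m:=m)); last by lia.
  congr 'C(_,_); lia.
have e1 : (m.+1).*2.-1 = m.*2.+1 by lia.
rewrite e1 in d1. rewrite /= in d2.
have e2 : (m.+1).*2 = m.*2.+2 by lia.
rewrite e2 in d1 h1.
rewrite h1 -d1 mulnCA h0.
rewrite s; nia.
Qed.

Section S.
Local Open Scope ring_scope.

Definition bz (N : nat) (j : int) : int :=
  match j with Posz k => ('C(N, k))%:Z | Negz _ => 0 end.

Definition Tn (r n : nat) : int :=
  match n with
  | 0%N => ((r == 0%N) : nat)%:Z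
  | m.+1 => bz m.*2.+1 (Posz m.+1 - Posz r) - bz m.*2.+1 (Posz m - Posz r)
  end.

Lemma bz_neg N j : j < 0 -> bz N j = 0.
Proof. by case: j. Qed.

Lemma bz_nat N (k : nat) : bz N k = ('C(N, k))%:Z.
Proof. by []. Qed.

Lemma bz2 N j : bz N.+2 j = bz N j + 2%:R * bz N (j - 1) + bz N (j - 2).
Proof.
case: j => [k|k]; last first.
  rewrite !bz_neg //; lia.
case: k => [|k].
  rewrite (@bz_neg _ (0 - 1)) // (@bz_neg _ (0 - 2)) //.
  by rewrite !bz_nat !bin0 addr0 addr0.
case: k => [|k].
  rewrite (@bz_neg _ (1 - 2)) // addr0.
  have -> : (Posz 1 - 1) = Posz 0 by [].
  rewrite !bz_nat !bin1 bin0; lia.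
have -> : Posz k.+2 - 1 = Posz k.+1 by lia.
have -> : Posz k.+2 - 2 = Posz k by lia.
rewrite !bz_nat !binS; lia.
Qed.


Lemma T0 n : Tn 0 n = ((n == 0%N) : nat)%:Z.
Proof.
case: n => [//|m] /=.
rewrite !addn0.
have -> : 'C(m.*2.+1, m.+1) = 'C(m.*2.+1, m).
  rewrite -bin_sub; last by lia.
  congr 'C(_,_); lia.
by rewrite subrr.
Qed.

Lemma Tgt r n : (n < r)%N -> Tn r n = 0.
Proof.
case: n => [|m] /= h; first by case: r h.
rewrite !bz_neg ?subrr //; lia.
Qed.

Lemma T1 k : Tn 1 k.+1 = (catalan k.+1)%:Z.
Proof.
case: k => [//|j] /=.
rewrite !subn1 /=.
have h := cat_add j.+2.
have e : (j.+2).*2 = (j.*2.+3).+1 by lia.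
rewrite e (binS (j.*2.+3) j.+2) (binS (j.*2.+3) j.+1) in h.
have s : 'C(j.*2.+3, j.+3) = 'C(j.*2.+3, j).
  rewrite -bin_sub; last by lia.
  congr 'C(_,_); lia.
rewrite s in h.
have e2 : j.+1.*2.+1 = j.*2.+3 by lia.
rewrite e2; lia.
Qed.

Lemma Trec r n : Tn r.+1 n.+1 = Tn r n + 2%:R * Tn r.+1 n + Tn r.+2 n.
Proof.
case: n => [|m].
  case: r => [|r] /=.
    by rewrite subnn bin0 subr0; ring.
  by ring.
rewrite /Tn.
set N := m.*2.+1.
have -> : m.+1.*2.+1 = N.+2 by rewrite /N; lia.
rewrite !bz2.
set a := Posz m.+1 - Posz r.
have -> : Posz m.+2 - Posz r.+1 = a by rewrite /a; lia.
have -> : Posz m.+1 - Posz r.+1 = a - 1 by rewrite /a; lia.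
have -> : Posz m - Posz r = a - 1 by rewrite /a; lia.
have -> : Posz m.+1 - Posz r.+2 = a - 2 by rewrite /a; lia.
have -> : Posz m - Posz r.+1 = a - 2 by rewrite /a; lia.
have -> : Posz m - Posz r.+2 = a - 3 by rewrite /a; lia.
have -> : a - 1 - 1 = a - 2 by lia.
have -> : a - 1 - 2 = a - 3 by lia.
ring.
Qed.


Definition cw (k : nat) : int := (((0 < k)%N * catalan k)%N)%:Z.

Lemma conv n r : \sum_(k < n.+1) cw k * Tn r (n - k) = Tn r.+1 n.
Proof.
elim: n r => [|n IH] r.
  by rewrite big_ord1 /cw /= mul0r.
case: r => [|s].
  rewrite T1 big_ord_recr /= big1 ?add0r.
    by rewrite subnn T0 eqxx /cw ltn0Sn mul1n mulr1.
  move=> k _; rewrite T0.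
  have -> : (n.+1 - widen_ord (leqnSn n.+1) k == 0)%N = false.
    apply/negbTE.
    rewrite /= subn_eq0 -ltnNge; exact: ltn_ord.
  by rewrite mulr0.
rewrite Trec big_ord_recr /= subnn [Tn s.+1 0]/= mulr0 addr0.
have e : forall k : 'I_n.+1, cw (widen_ord (leqnSn n.+1) k) * Tn s.+1 (n.+1 - widen_ord (leqnSn n.+1) k)
   = cw k * Tn s (n - k) + 2%:R * (cw k * Tn s.+1 (n - k)) + cw k * Tn s.+2 (n - k).
  move=> k /=; rewrite subSn ?Trec; last by have := ltn_ord k; lia.
  ring.
rewrite (eq_bigr _ (fun k _ => e k)) !big_split /= -mulr_sumr !IH.
by [].
Qed.


Definition G n : {poly int} := \sum_(j < n.+1) cw j *: 'X^j.

Lemma coefG n i : (i < n.+1)%N -> (G n)`_i = cw i.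
Proof.
move=> hi; rewrite /G coef_sum (bigD1 (Ordinal hi)) //= big1 ?addr0.
  by rewrite coefZ coefXn eqxx mulr1.
move=> j hj; rewrite coefZ coefXn.
have -> : (i == j) = false.
  apply/negbTE; apply: contra hj => /eqP h; apply/eqP; apply: val_inj => /=.
  by rewrite h.
by rewrite mulr0.
Qed.

Lemma coefGX n r m : (m < n.+1)%N -> ((G n)^+r)`_m = Tn r m.
Proof.
elim: r m => [|r IH] m hm.
  rewrite expr0 coef1 T0.
  by case: m hm.
rewrite exprS coefM -conv.
apply: eq_bigr => k _.
rewrite coefG ?IH //.
  by have := ltn_ord k; lia.
by have := ltn_ord k; lia.
Qed.


Lemma prodZX (I : finType) (a : I -> int) (e : I -> nat) :
  \prod_i (a i *: ('X^(e i) : {poly int})) = (\prod_i a i) *: 'X^(\sum_i e i).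
Proof.
under eq_bigr do rewrite -mul_polyC.
by rewrite big_split /= -rmorph_prod prodrXr mul_polyC.
Qed.

Lemma prodpos (r m : nat) (f : {ffun 'I_r -> 'I_m}) :
  (\prod_i ((0 < f i) * catalan (f i)) =
   [forall i, (0 < f i)%N] * \prod_i catalan (f i))%N.
Proof.
case: (boolP [forall i, (0 < f i)%N]) => h.
  rewrite mul1n; apply: eq_bigr => i _.
  by move/forallP: h => h; rewrite h mul1n.
move/forallPn: h => [i hi].
by rewrite (bigD1 i) //= (negbTE hi) mul0n mul0n.
Qed.

Lemma PG r n : (P r n)%:Z = ((G n)^+r)`_n.
Proof.
have -> : (G n)^+r = \prod_(i < r) G n by rewrite prodr_const card_ord.
rewrite /G bigA_distr_bigA /= coef_sum /P big_mkcond /= -natz natr_sum.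
apply: eq_bigr => f _.
rewrite prodZX coefZ coefXn.
rewrite /cw -(big_morph _ PoszM (erefl (Posz 1%N))) prodpos.
case: (boolP [forall i, (0 < f i)%N]) => h /=.
  rewrite mul1n (eq_sym n); case: ((\sum_(s < r) f s)%N == n).
    by rewrite mulr1 natz.
  by rewrite mulr0.
have -> : forall x, (0 * x)%N = 0%N by [].
by rewrite mul0r.
Qed.


Definition Sw (w : nat -> int) n := \sum_(r < n.+1) w r * Tn r n.

Lemma shift1 w n : \sum_(r < n.+1) w r.+1 * Tn r.+1 n = Sw w n - w 0%N * Tn 0 n.
Proof.
rewrite /Sw [in LHS]big_ord_recr [in RHS]big_ord_recl /= Tgt //.
rewrite mulr0 addr0 /bump /=.
under [in RHS]eq_bigr do rewrite add1n.
ring.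
Qed.

Lemma shift2 w n : \sum_(r < n.+1) w r.+2 * Tn r.+2 n
   = Sw w n - w 0%N * Tn 0 n - w 1%N * Tn 1 n.
Proof.
have h := shift1 w n.
rewrite big_ord_recl /bump /= in h.
rewrite big_ord_recr /= Tgt // mulr0 addr0.
have -> : \sum_(i < n) w i.+2 * Tn i.+2 n = \sum_(i < n) w (bump 0 i).+1 * Tn (bump 0 i).+1 n by [].
rewrite -h; ring.
Qed.

Lemma Srec w e n : e * e = 1 -> (forall r, w r.+1 = e * w r) ->
  Sw w n.+1 = e * Sw w n + 2%:R * (Sw w n - w 0%N * Tn 0 n)
            + e * (Sw w n - w 0%N * Tn 0 n - w 1%N * Tn 1 n).
Proof.
move=> ee hw.
rewrite -shift2 -shift1 {1}/Sw big_ord_recl T0 mulr0 add0r.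
rewrite mulr_sumr mulr_sumr mulr_sumr -!big_split /=.
apply: eq_bigr => i _.
have -> : bump 0 i = i.+1 by [].
rewrite -[w i.+1 * _]/(w i.+1 * Tn i.+1 n.+1).
rewrite Trec (hw i.+1) (hw i) !mulrA ee !mul1r; ring.
Qed.


Lemma Aclosed m : Sw (fun _ => 1) m.+1 = (m.*2.+1 * catalan m)%N%:Z.
Proof.
elim: m => [|m IH].
  by rewrite /Sw !big_ord_recr big_ord0.
rewrite (@Srec _ 1) ?mulr1 // IH T0 T1 /=.
have h := cat_ratio m.
nia.
Qed.

Lemma Dclosed m : Sw (fun r => (-1) ^+ r) m.+1 = - (catalan m)%:Z.
Proof.
rewrite (@Srec _ (-1)) ?mulrNN ?mulr1 //; last by move=> r; rewrite exprS.
rewrite expr0 expr1 !mul1r.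
case: m => [|k].
  rewrite T0 /=; have -> : catalan 0 = 1%N by []. ring.
rewrite T0 T1 /=; ring.
Qed.

Lemma filt (p : pred nat) (F : nat -> int) n :
  \sum_(1 <= r < n.+1 | p r) F r = \sum_(r < n.+1) (p r : nat)%:Z * F r - (p 0%N : nat)%:Z * F 0%N.
Proof.
rewrite big_mkcond -(big_mkord xpredT (fun r => (p r : nat)%:Z * F r)) [in RHS]big_ltn //.
rewrite addrAC subrr add0r; apply: eq_big_nat => r _.
by case: (p r); rewrite ?mul1r ?mul0r.
Qed.

Lemma PT r n : ((P r n)%:Z) = Tn r n.
Proof. by rewrite PG coefGX. Qed.

Lemma oddsum n : (0 < n)%N ->
  ((\sum_(1 <= r < n.+1 | odd r) P r n)%N)%:Z = (n * catalan n.-1)%N%:Z.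
Proof.
case: n => [//|m] _.
rewrite (big_morph _ PoszD (erefl (Posz 0))).
under eq_bigr do rewrite PT.
rewrite filt mul0r subr0.
have h : 2%:R * \sum_(r < m.+2) (odd r : nat)%:Z * Tn r m.+1
   = Sw (fun _ => 1) m.+1 - Sw (fun r => (-1) ^+ r) m.+1.
  rewrite /Sw -sumrB mulr_sumr; apply: eq_bigr => r _.
  rewrite -signr_odd; case: (odd r) => /=; ring.
rewrite Aclosed Dclosed in h.
move: h; set O := \sum_(_ < _) _ => h /=.
nia.
Qed.

Lemma evensum n : (0 < n)%N ->
  ((\sum_(1 <= r < n.+1 | ~~ odd r) P r n)%N)%:Z = (n.-1 * catalan n.-1)%N%:Z.
Proof.
case: n => [//|m] _.
rewrite (big_morph _ PoszD (erefl (Posz 0))).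
under eq_bigr do rewrite PT.
rewrite filt T0 mulr0 subr0.
have h : 2%:R * \sum_(r < m.+2) (~~ odd r : nat)%:Z * Tn r m.+1
   = Sw (fun _ => 1) m.+1 + Sw (fun r => (-1) ^+ r) m.+1.
  rewrite /Sw -big_split mulr_sumr; apply: eq_bigr => r _.
  rewrite -signr_odd; case: (odd r) => /=; ring.
rewrite Aclosed Dclosed in h.
move: h; set O := \sum_(_ < _) _ => h /=.
nia.
Qed.

End S.

Theorem lemma5p10 (n : nat) : 0 < n ->
  \sum_(1 <= r < n.+1 | odd r) P r n = n * catalan n.-1 /\
  \sum_(1 <= r < n.+1 | ~~ odd r) P r n = n.-1 * catalan n.-1.
Proof.
move=> hn; split.
  by have [] := oddsum n hn.
by have [] := evensum n hn.
Qed.
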